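(* Let $M=(E,r)$ be a matroid with $E$ nonempty and $r(M)=r(E)$. Then, as formal power series in $v,w$, \[ \sum_{t,u\ge 0}Q_M(t,u)\,v^t w^u=\frac{1}{(1-v)^{|E|-r(M)}(1-w)^{r(M)}(1-vw)}\cdot T_M\!\left(\frac{1-vw}{1-v},\ \frac{1-vw}{1-w}\right). \]
   Context: For a matroid $M=(E,r)$, $P(M)\subseteq\mathbb R^E$ is the convex hull of the indicator vectors $\mathbf e_B$ of its bases $B$. Let $\Delta=\operatorname{conv}\{\mathbf e_i:i\in E\}$ and $\nabla=-\Delta$. For integers $t,u\ge 0$ let $Q_M(t,u)=\#\big((P(M)+u\Delta+t\nabla)\cap\mathbb Z^E\big)$ (Minkowski sum). The Tutte polynomial is $T_M(x,y)=\sum_{S\subseteq E}(x-1)^{r(E)-r(S)}(y-1)^{|S|-r(S)}$; the right-hand side is a rational function in $v,w$ regular at the origin, and is interpreted via its power series expansion. *)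

(* Defs.v *)
From HB Require Import structures.
From mathcomp Require Import all_boot all_order all_algebra.
From Stdlib Require Import ClassicalEpsilon.
Set Implicit Arguments.
Unset Strict Implicit.
Unset Printing Implicit Defensive.
Import Order.TTheory GRing.Theory Num.Theory.
Local Open Scope ring_scope.

Definition is_matroid_rank (E : finType) (r : {set E} -> nat) : Prop :=
  [/\ forall X : {set E}, (r X <= #|X|)%N,
      forall X Y : {set E}, X \subset Y -> (r X <= r Y)%N &
      forall X Y : {set E}, (r (X :|: Y) + r (X :&: Y) <= r X + r Y)%N].

Definition is_basis (E : finType) (r : {set E} -> nat) (B : {set E}) : bool :=
  (r B == #|B|) && (#|B| == r [set: E]).

Definition in_hull (R : realFieldType) (E I : finType) (A : {pred I})
    (pts : I -> E -> R) (x : E -> R) : Prop :=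
  exists l : I -> R,
    [/\ forall i, 0 <= l i,
        forall i, i \notin A -> l i = 0,
        \sum_(i in A) l i = 1 &
        forall e, x e = \sum_(i in A) l i * pts i e].

Definition indic (R : realFieldType) (E : finType) (S : {set E}) : E -> R :=
  fun e => if e \in S then 1 else 0.

Definition in_PM (R : realFieldType) (E : finType) (r : {set E} -> nat) (x : E -> R) :=
  in_hull (is_basis r) (fun B => indic R B) x.

Definition in_Delta (R : realFieldType) (E : finType) (x : E -> R) :=
  in_hull (I := E) predT (fun i : E => indic R [set i]) x.

(* x in P(M) + u Delta + t Nabla, where Nabla = - Delta *)
Definition in_minkowski (R : realFieldType) (E : finType) (r : {set E} -> nat)
    (t u : nat) (x : E -> R) : Prop :=
  exists p d1 d2 : E -> R,
    [/\ in_PM r p, in_Delta d1, in_Delta d2 &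
        forall e, x e = p e + u%:R * d1 e + t%:R * (- d2 e)].

Definition asbool (P : Prop) : bool :=
  if excluded_middle_informative P then true else false.

(* Q_M(t,u) = number of integer points of P(M) + u Delta + t Nabla.
   Every such point has all coordinates in [-t, u+1] (since P(M) ⊆ [0,1]^E,
   u Delta ⊆ [0,u]^E, t Nabla ⊆ [-t,0]^E), so we enumerate the integer points
   x = f - t with f : E -> {0, ..., t+u+1}. *)
Definition QM (R : realFieldType) (E : finType) (r : {set E} -> nat) (t u : nat) : nat :=
  #|[set f : {ffun E -> 'I_(t + u + 2)} |
       asbool (in_minkowski r t u (fun e => (nat_of_ord (f e))%:R - t%:R : R))]|.

(* a series is its coefficient function: s t u = coefficient of v^t w^u *)
Definition fps := nat -> nat -> rat.

Definition fps_const (c : rat) : fps := fun t u => if (t == 0)%N && (u == 0)%N then c else 0.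
Definition fps_v : fps := fun t u => if (t == 1)%N && (u == 0)%N then 1 else 0.
Definition fps_w : fps := fun t u => if (t == 0)%N && (u == 1)%N then 1 else 0.
Definition fps_add (f g : fps) : fps := fun t u => f t u + g t u.
Definition fps_sub (f g : fps) : fps := fun t u => f t u - g t u.
Definition fps_mul (f g : fps) : fps :=
  fun t u => \sum_(i < t.+1) \sum_(j < u.+1) f i j * g (t - i)%N (u - j)%N.
Fixpoint fps_pow (f : fps) (n : nat) : fps :=
  match n with 0 => fps_const 1 | n'.+1 => fps_mul f (fps_pow f n') end.

(* multiplicative inverse of a series with nonzero constant term, computed by
   the usual recursion on total degree: inv_aux f N is correct in degrees <= N *)
Fixpoint fps_inv_aux (f : fps) (N : nat) : fps :=
  match N with
  | 0 => fun t u => if (t == 0)%N && (u == 0)%N then (f 0%N 0%N)^-1 else 0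
  | N'.+1 =>
      let g := fps_inv_aux f N' in
      fun t u =>
        if (t + u <= N')%N then g t u
        else - ((\sum_(i < t.+1) \sum_(j < u.+1)
                   (if (i + j == 0)%N then 0 else f i j * g (t - i)%N (u - j)%N))
                / f 0%N 0%N)
  end.
Definition fps_inv (f : fps) : fps := fun t u => fps_inv_aux f (t + u) t u.

Definition tutte_eval (E : finType) (r : {set E} -> nat) (X Y : fps) : fps :=
  fun t u => \sum_(S : {set E})
     fps_mul (fps_pow (fps_sub X (fps_const 1)) (r [set: E] - r S)%N)
             (fps_pow (fps_sub Y (fps_const 1)) (#|S| - r S)%N) t u.

Definition one_minus (f : fps) : fps := fps_sub (fps_const 1) f.
Definition fps_vw : fps := fps_mul fps_v fps_w.

Definition rhs_series (E : finType) (r : {set E} -> nat) : fps :=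
  let rM := r [set: E] in
  fps_mul (fps_inv (fps_mul (fps_mul (fps_pow (one_minus fps_v) (#|E| - rM)%N)
                                     (fps_pow (one_minus fps_w) rM))
                            (one_minus fps_vw)))
          (tutte_eval r (fps_mul (one_minus fps_vw) (fps_inv (one_minus fps_v)))
                        (fps_mul (one_minus fps_vw) (fps_inv (one_minus fps_w)))).

(* Main.v *)
Require Import Defs.
From HB Require Import structures.
From mathcomp Require Import all_boot all_order all_algebra.
From mathcomp Require boolp.
From mathcomp Require Import zify ring lra.
From Stdlib Require Import FunctionalExtensionality ClassicalEpsilon.
Set Implicit Arguments. Unset Strict Implicit. Unset Printing Implicit Defensive.
Import Order.TTheory GRing.Theory Num.Theory.
Local Open Scope ring_scope.

Lemma fpsP (f g : fps) : (forall t u, f t u = g t u) -> f = g.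
Proof.
move=> H; apply: functional_extensionality => t.
apply: functional_extensionality => u; exact: H.
Qed.

Definition trP (T U : nat) (f : fps) : {poly {poly rat}} :=
  \poly_(i < T.+1) \poly_(j < U.+1) f i j.

Lemma coef_trP T U f i j : (i <= T)%N -> (j <= U)%N -> ((trP T U f)`_i)`_j = f i j.
Proof. by move=> hi hj; rewrite /trP coef_poly ltnS hi coef_poly ltnS hj. Qed.

Lemma mulK T U f g t u : (t <= T)%N -> (u <= U)%N ->
  fps_mul f g t u = ((trP T U f * trP T U g)`_t)`_u.
Proof.
move=> ht hu; rewrite coefM coef_sum /fps_mul; apply: eq_bigr => [[i hi]] _ /=.
rewrite coefM; apply: eq_bigr => [[j hj]] _ /=.
rewrite !coef_trP //; lia.
Qed.

Lemma coef_mul_box (P P' Q Q' : {poly {poly rat}}) t u :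
  (forall i j, (i <= t)%N -> (j <= u)%N -> P`_i`_j = P'`_i`_j) ->
  (forall i j, (i <= t)%N -> (j <= u)%N -> Q`_i`_j = Q'`_i`_j) ->
  (P * Q)`_t`_u = (P' * Q')`_t`_u.
Proof.
move=> HP HQ; rewrite !coefM !coef_sum; apply: eq_bigr => [[i hi]] _ /=.
rewrite !coefM; apply: eq_bigr => [[j hj]] _ /=.
rewrite HP ?HQ //; lia.
Qed.

Lemma trP_mul t u f g i j : (i <= t)%N -> (j <= u)%N ->
  (trP t u (fps_mul f g))`_i`_j = (trP t u f * trP t u g)`_i`_j.
Proof. by move=> hi hj; rewrite coef_trP // (mulK f g hi hj). Qed.

Lemma fps_mulA : associative fps_mul.
Proof.
move=> f g h; apply: fpsP => t u.
have E1 : fps_mul (fps_mul f g) h t u = (trP t u f * trP t u g * trP t u h)`_t`_u.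
  rewrite (mulK (fps_mul f g) h (leqnn t) (leqnn u)).
  apply: coef_mul_box => // i j hi hj; exact: trP_mul.
have E2 : fps_mul f (fps_mul g h) t u = (trP t u f * (trP t u g * trP t u h))`_t`_u.
  rewrite (mulK f (fps_mul g h) (leqnn t) (leqnn u)).
  apply: coef_mul_box => // i j hi hj; exact: trP_mul.
by rewrite E1 E2 mulrA.
Qed.

Lemma fps_mulC : commutative fps_mul.
Proof.
move=> f g; apply: fpsP => t u.
by rewrite (mulK _ _ (leqnn t) (leqnn u)) [RHS](mulK _ _ (leqnn t) (leqnn u)) mulrC.
Qed.

Lemma fps_mul1 : left_id (fps_const 1) fps_mul.
Proof.
move=> f; apply: fpsP => t u; rewrite (mulK _ _ (leqnn t) (leqnn u)).
rewrite (@coef_mul_box _ 1 _ (trP t u f)) ?mul1r ?coef_trP // => i j hi hj.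
rewrite coef_trP // coef1 /fps_const; case: (i == 0)%N => /=.
  by rewrite coef1; case: (j == 0)%N.
by rewrite coef0.
Qed.

Lemma fps_mulDl : left_distributive fps_mul fps_add.
Proof.
move=> f g h; apply: fpsP => t u; rewrite /fps_mul /fps_add -big_split /=.
by apply: eq_bigr => i _; rewrite -big_split; apply: eq_bigr => j _; rewrite mulrDl.
Qed.

Definition fps0 : fps := fun _ _ => 0.
Definition fps_opp (f : fps) : fps := fun t u => - f t u.

Lemma fps_addA : associative fps_add.
Proof. by move=> f g h; apply: fpsP => t u; rewrite /fps_add addrA. Qed.
Lemma fps_addC : commutative fps_add.
Proof. by move=> f g; apply: fpsP => t u; rewrite /fps_add addrC. Qed.
Lemma fps_add0 : left_id fps0 fps_add.
Proof. by move=> f; apply: fpsP => t u; rewrite /fps_add /fps0 add0r. Qed.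
Lemma fps_addN : left_inverse fps0 fps_opp fps_add.
Proof. by move=> f; apply: fpsP => t u; rewrite /fps_add /fps0 /fps_opp addNr. Qed.

Definition fpsR := fps.
HB.instance Definition _ := boolp.gen_eqMixin fpsR.
HB.instance Definition _ := boolp.gen_choiceMixin fpsR.
HB.instance Definition _ := GRing.isZmodule.Build fpsR fps_addA fps_addC fps_add0 fps_addN.

Lemma fps_one_neq0 : (fps_const 1 : fpsR) != 0.
Proof.
apply/eqP => H; have := congr1 (fun f : fpsR => f 0%N 0%N) H.
by rewrite /= /fps_const /= /GRing.zero /= /fps0.
Qed.

HB.instance Definition _ := GRing.Zmodule_isComNzRing.Build fpsR
  fps_mulA fps_mulC fps_mul1 fps_mulDl fps_one_neq0.

Lemma fpsE_add (f g : fps) : fps_add f g = (f : fpsR) + (g : fpsR). Proof. by []. Qed.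
Lemma fpsE_mul (f g : fps) : fps_mul f g = (f : fpsR) * (g : fpsR). Proof. by []. Qed.
Lemma fpsE_one : fps_const 1 = (1 : fpsR). Proof. by []. Qed.
Lemma fpsE_sub (f g : fps) : fps_sub f g = (f : fpsR) - (g : fpsR). Proof. by []. Qed.
Lemma fpsE_pow (f : fps) n : fps_pow f n = (f : fpsR) ^+ n.
Proof. by elim: n => // n IH; rewrite exprS /= IH. Qed.
Lemma fps_addE (f g : fpsR) t u : (f + g) t u = f t u + g t u. Proof. by []. Qed.
Lemma fps_zeroE t u : (0 : fpsR) t u = 0. Proof. by []. Qed.
Lemma fps_sumE (I : Type) (s : seq I) (P : pred I) (F : I -> fpsR) t u :
  (\sum_(i <- s | P i) F i) t u = \sum_(i <- s | P i) F i t u.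
Proof. by elim/big_rec2: _ => // i y1 y2 _ <-. Qed.

Lemma split00 (t u : nat) (F : nat -> nat -> rat) :
  \sum_(i < t.+1) \sum_(j < u.+1) F i j =
  F 0%N 0%N + \sum_(i < t.+1) \sum_(j < u.+1) (if (i + j == 0)%N then 0 else F i j).
Proof.
rewrite big_ord_recl [in RHS]big_ord_recl big_ord_recl [in RHS]big_ord_recl /=.
rewrite add0r -!addrA; congr (_ + _); congr (_ + _).
Qed.

Lemma inv_aux_eq (f g : fps) : f 0%N 0%N != 0 ->
  (forall t u, fps_mul f g t u = fps_const 1 t u) ->
  forall N t u, (t + u <= N)%N -> fps_inv_aux f N t u = g t u.
Proof.
move=> f0 H; elim=> [|N IH] t u htu.
  have [-> ->] : t = 0%N /\ u = 0%N by lia.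
  have := H 0%N 0%N; rewrite /fps_mul !big_ord1 /fps_const /= => h.
  rewrite /=; apply: (mulfI f0); by rewrite mulfV // -h.
rewrite /=; case: ifP => [h|h]; first by apply: IH.
have := H t u; rewrite /fps_mul (@split00 t u (fun i j => f i j * g (t - i)%N (u - j)%N)) /fps_const.
have -> : ((t == 0) && (u == 0))%N = false by apply/negbTE; lia.
rewrite !subn0 => h0.
have E : \sum_(i < t.+1) \sum_(j < u.+1)
     (if (i + j == 0)%N then 0 else f i j * fps_inv_aux f N (t - i)%N (u - j)%N) =
   \sum_(i < t.+1) \sum_(j < u.+1)
     (if (i + j == 0)%N then 0 else f i j * g (t - i)%N (u - j)%N).
  apply: eq_bigr => [[i hi]] _; apply: eq_bigr => [[j hj]] _ /=.
  case: ifP => // /negbT hij; rewrite IH //; move/negbT: h => h; lia.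
rewrite E.
have -> : \sum_(i < t.+1) \sum_(j < u.+1)
     (if (i + j == 0)%N then 0 else f i j * g (t - i)%N (u - j)%N) = - (f 0%N 0%N * g t u).
  by apply/eqP; rewrite -addr_eq0 addrC h0.
by rewrite mulNr opprK [f 0%N 0%N * _]mulrC mulfK.
Qed.

Lemma inv_unique (f g : fps) : f 0%N 0%N != 0 ->
  (forall t u, fps_mul f g t u = fps_const 1 t u) -> fps_inv f = g.
Proof.
move=> f0 H; apply: fpsP => t u; rewrite /fps_inv; exact: inv_aux_eq.
Qed.

Definition mono (p q : nat) : fps := fun i j => if (i == p) && (j == q) then 1 else 0.

Lemma sum_ord_if (n p : nat) (F : nat -> rat) :
  \sum_(i < n) (if (i : nat) == p then F i else 0) = if (p < n)%N then F p else 0.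
Proof. by rewrite -big_mkcond /= big_ord1_eq. Qed.

Lemma mono_mulE p q (g : fps) t u :
  fps_mul (mono p q) g t u = if (p <= t)%N && (q <= u)%N then g (t - p)%N (u - q)%N else 0.
Proof.
rewrite /fps_mul /mono.
transitivity (\sum_(i < t.+1) (if (i:nat) == p then \sum_(j < u.+1)
     (if (j:nat) == q then g (t - i)%N (u - j)%N else 0) else 0)).
  apply: eq_bigr => i _; case: (i == p :> nat) => /=; last first.
    by rewrite big1 // => j _; rewrite mul0r.
  by apply: eq_bigr => j _; case: (j == q :> nat); rewrite ?mul1r ?mul0r.
rewrite (sum_ord_if _ _ (fun i => \sum_(j < u.+1)
     (if (j:nat) == q then g (t - i)%N (u - j)%N else 0))).
rewrite (sum_ord_if _ _ (fun j => g (t - p)%N (u - j)%N)) !ltnS.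
by case: (p <= t)%N; case: (q <= u)%N.
Qed.

Lemma mono_mul p q p' q' : fps_mul (mono p q) (mono p' q') = mono (p + p') (q + q').
Proof.
apply: fpsP => t u; rewrite mono_mulE /mono.
case: (leqP p t) => hp; case: (leqP q u) => hq /=; try (symmetry; apply/ifF; lia).
by congr (if _ then _ else _); apply/idP/idP; lia.
Qed.

Lemma mono00 : mono 0 0 = fps_const 1.
Proof. by []. Qed.

Lemma mono_pow p q n : (mono p q : fpsR) ^+ n = mono (p * n) (q * n).
Proof.
elim: n => [|n IH]; first by rewrite expr0 !muln0.
by rewrite exprS IH -fpsE_mul mono_mul !mulnS.
Qed.

Lemma fps_vE : fps_v = mono 1 0. Proof. by []. Qed.
Lemma fps_wE : fps_w = mono 0 1. Proof. by []. Qed.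
Lemma fps_vwE : fps_vw = mono 1 1.
Proof. by rewrite /fps_vw fps_vE fps_wE mono_mul. Qed.

Definition geo1 : fps := fun t u => if u == 0%N then 1 else 0.
Definition geo2 : fps := fun t u => if t == 0%N then 1 else 0.
Definition geo3 : fps := fun t u => if t == u then 1 else 0.

Lemma geo1_inv : (1 - (mono 1 0 : fpsR)) * (geo1 : fpsR) = 1.
Proof.
rewrite mulrBl mul1r; apply: fpsP => t u.
rewrite /GRing.add /GRing.opp /= /fps_add /fps_opp -fpsE_mul mono_mulE /geo1 /fps_const /=.
by case: t => [|t]; case: u => [|u] //=; rewrite ?subrr ?subr0 ?subn0.
Qed.

Lemma geo2_inv : (1 - (mono 0 1 : fpsR)) * (geo2 : fpsR) = 1.
Proof.
rewrite mulrBl mul1r; apply: fpsP => t u.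
rewrite /GRing.add /GRing.opp /= /fps_add /fps_opp -fpsE_mul mono_mulE /geo2 /fps_const /=.
by case: t => [|t]; case: u => [|u] //=; rewrite ?subrr ?subr0 ?subn0.
Qed.

Lemma geo3_inv : (1 - (mono 1 1 : fpsR)) * (geo3 : fpsR) = 1.
Proof.
rewrite mulrBl mul1r; apply: fpsP => t u.
rewrite /GRing.add /GRing.opp /= /fps_add /fps_opp -fpsE_mul mono_mulE /geo3 /fps_const /=.
case: t => [|t]; case: u => [|u] //=; rewrite ?subrr ?subr0 ?subn0 //.
by rewrite !subSS !subn0 eqSS; case: (t == u).
Qed.

Lemma inv_unique' (f g : fps) :
  (f : fpsR) * (g : fpsR) = 1 -> fps_inv f = g.
Proof.
move=> H.
have H' : forall t u, fps_mul f g t u = fps_const 1 t u by move=> t u; rewrite fpsE_mul H.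
apply: inv_unique => //; apply/eqP => f0.
have := H' 0%N 0%N; rewrite /fps_mul !big_ord1 /= f0 mul0r /fps_const /= => h.
by move: (@oner_neq0 rat); rewrite -h eqxx.
Qed.

Lemma alg_key (R : comRingType) (v w G1 G2 G3 : R) (a b m k n1 n2 : nat) :
  (1 - v) * G1 = 1 -> (1 - w) * G2 = 1 -> (n1 + a = m + b)%N -> (n2 + b = k + a)%N ->
  G1 ^+ n1 * G2 ^+ n2 * G3 * ((v * (1 - w) * G1) ^+ a * (w * (1 - v) * G2) ^+ b) =
  v ^+ a * w ^+ b * G1 ^+ m * G2 ^+ k * G3.
Proof.
move=> h1 h2 e1 e2.
have L : G1 ^+ n1 * G2 ^+ n2 * G3 * ((v * (1 - w) * G1) ^+ a * (w * (1 - v) * G2) ^+ b) =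
   v ^+ a * w ^+ b * G3 * ((G1 ^+ (n1 + a) * (1 - v) ^+ b) * (G2 ^+ (n2 + b) * (1 - w) ^+ a)).
  rewrite !exprMn !exprD; ring.
rewrite L e1 e2 !exprD -(mulrA (G1 ^+ m)) -(mulrA (G2 ^+ k)) -!exprMn.
rewrite (mulrC G1) (mulrC G2) h1 h2 !expr1n !mulr1; ring.
Qed.

Notation V := (mono 1 0 : fpsR).
Notation W := (mono 0 1 : fpsR).

Lemma VW : (mono 1 1 : fpsR) = V * W.
Proof. by rewrite -fpsE_mul mono_mul. Qed.

Lemma Xm1 : ((1 - (mono 1 1 : fpsR)) * (geo1 : fpsR) - 1) = V * (1 - W) * geo1.
Proof. by rewrite -{2}geo1_inv VW; ring. Qed.

Lemma Ym1 : ((1 - (mono 1 1 : fpsR)) * (geo2 : fpsR) - 1) = W * (1 - V) * geo2.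
Proof. by rewrite -{2}geo2_inv VW; ring. Qed.

Lemma monoE a b : (mono a b : fpsR) = V ^+ a * W ^+ b.
Proof. by rewrite !mono_pow -fpsE_mul mono_mul !mul1n !mul0n addn0 add0n. Qed.

Lemma alg3 (R : comRingType) (x y z g h k : R) n m :
  x ^+ n * y ^+ m * z * (g ^+ n * h ^+ m * k) = (x * g) ^+ n * (y * h) ^+ m * (z * k).
Proof. by rewrite !exprMn; ring. Qed.

Lemma one_minusE f : one_minus f = (1 : fpsR) - (f : fpsR). Proof. by []. Qed.

Lemma rhs_decomp (E : finType) (r : {set E} -> nat)
  (hle : forall S, (r S <= r setT)%N /\ (r S <= #|S|)%N) (hn : (r setT <= #|E|)%N) t u :
  rhs_series r t u = \sum_(S : {set E})
    ((mono (r setT - r S) (#|S| - r S) : fpsR) * (geo1 : fpsR) ^+ (#|E| - #|S|)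
        * (geo2 : fpsR) ^+ #|S| * (geo3 : fpsR)) t u.
Proof.
have I1 : fps_inv (one_minus fps_v) = geo1 by apply: inv_unique'; exact: geo1_inv.
have I2 : fps_inv (one_minus fps_w) = geo2 by apply: inv_unique'; exact: geo2_inv.
set rr := r setT.
have ID : fps_inv (fps_mul (fps_mul (fps_pow (one_minus fps_v) (#|E| - rr)%N)
                                     (fps_pow (one_minus fps_w) rr))
                            (one_minus fps_vw)) =
          (geo1 : fpsR) ^+ (#|E| - rr) * (geo2 : fpsR) ^+ rr * (geo3 : fpsR).
  apply: inv_unique'; rewrite !fpsE_mul !fpsE_pow fps_vwE !one_minusE fps_vE fps_wE.
  transitivity (((1 - V) * (geo1 : fpsR)) ^+ (#|E| - rr) * ((1 - W) * (geo2 : fpsR)) ^+ rr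
                 * ((1 - (mono 1 1 : fpsR)) * (geo3 : fpsR))).
    exact: alg3.
  by rewrite geo1_inv geo2_inv geo3_inv !expr1n !mulr1.
rewrite /rhs_series ID I1 I2 fps_vwE.
set X := fps_mul _ geo1. set Y := fps_mul _ geo2.
have T : tutte_eval r X Y = \sum_(S : {set E})
     (((V * (1 - W) * geo1) ^+ (rr - r S)) * ((W * (1 - V) * geo2) ^+ (#|S| - r S)) : fpsR).
  apply: fpsP => t' u'; rewrite fps_sumE /tutte_eval; apply: eq_bigr => S _.
  by rewrite fpsE_mul !fpsE_pow !fpsE_sub /X /Y !fpsE_mul Xm1 Ym1.
rewrite fpsE_mul T mulr_sumr fps_sumE; apply: eq_bigr => S _.
have [h1 h2] := hle S.
have e1 : (#|E| - rr + (rr - r S) = #|E| - #|S| + (#|S| - r S))%N.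
  have hS : (#|S| <= #|E|)%N by rewrite -cardsT; apply: subset_leq_card; apply: subsetT.
  lia.
have e2 : (rr + (#|S| - r S) = #|S| + (rr - r S))%N by lia.
rewrite (alg_key (geo3 : fpsR) geo1_inv geo2_inv e1 e2).
by rewrite [mono (rr - r S) _]monoE.
Qed.

Definition box (T U : nat) (f g : fps) := forall i j, (i <= T)%N -> (j <= U)%N -> f i j = g i j.

Lemma box_mul T U (f f' g g' : fpsR) : box T U f f' -> box T U g g' -> box T U (f * g) (f' * g').
Proof.
move=> hf hg i j hi hj; rewrite -!fpsE_mul /fps_mul.
apply: eq_bigr => [[a ha]] _; apply: eq_bigr => [[b hb]] _ /=.
rewrite hf ?hg //; lia.
Qed.

Lemma box_pow T U (f f' : fpsR) n : box T U f f' -> box T U (f ^+ n) (f' ^+ n).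
Proof.
move=> h; elim: n => [|n IH]; first by move=> i j _ _; rewrite !expr0.
by rewrite !exprS; apply: box_mul.
Qed.

Lemma prod_mono (I : Type) (s : seq I) (P : pred I) (a b : I -> nat) :
  \prod_(i <- s | P i) (mono (a i) (b i) : fpsR) =
  mono (\sum_(i <- s | P i) a i) (\sum_(i <- s | P i) b i).
Proof.
elim: s => [|x s IH]; first by rewrite !big_nil.
rewrite !big_cons; case: (P x) => //.
by rewrite IH -fpsE_mul mono_mul.
Qed.


Definition posS (E : finType) (t K : nat) (f : {ffun E -> 'I_K}) : {set E} :=
  [set e | (t < f e)%N].
Definition alphaS (E : finType) (S : {set E}) (t K : nat) (f : {ffun E -> 'I_K}) : nat :=
  \sum_(e in ~: S) (t - f e)%N.
Definition betaS (E : finType) (S : {set E}) (t K : nat) (f : {ffun E -> 'I_K}) : nat :=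
  \sum_(e in S) (f e - t - 1)%N.

Definition hS (E : finType) (S : {set E}) (t K : nat) (e : E) (c : 'I_K) : fpsR :=
  if (t < c)%N == (e \in S) then
    (if e \in S then (mono 0 (c - t - 1) : fpsR) else mono (t - c) 0) else 0.

Definition Fs (E : finType) (S : {set E}) (t K : nat) : fpsR :=
  \sum_(f : {ffun E -> 'I_K})
     (if posS t f == S then (mono (alphaS S t f) (betaS S t f) : fpsR) else 0).

Lemma Fs_prod (E : finType) (S : {set E}) t K :
  Fs S t K = \prod_(e : E) \sum_(c : 'I_K) hS S t e c.
Proof.
rewrite bigA_distr_bigA /Fs; apply: eq_bigr => f _.
case: eqP => [hp|hp].
  symmetry; transitivity (\prod_(e : E) (mono (if e \in S then 0 else t - f e)%N
                                  (if e \in S then f e - t - 1 else 0)%N : fpsR)).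
    apply: eq_bigr => e _; rewrite /hS.
    have -> : ((t < f e)%N == (e \in S)) by rewrite -hp inE.
    by case: (e \in S).
  rewrite prod_mono /alphaS /betaS; congr mono.
    by rewrite [in RHS]big_mkcond /=; apply: eq_bigr => e _; rewrite inE; case: (e \in S).
  by rewrite [in RHS]big_mkcond /=; apply: eq_bigr => e _; case: (e \in S).
have : ~~ [forall e, (t < f e)%N == (e \in S)].
  apply/negP => /forallP H; apply: hp; apply/setP => e; rewrite inE; exact: (eqP (H e)).
rewrite negb_forall => /existsP [e /negbTE he].
by rewrite (bigD1 e) //= /hS he mul0r.
Qed.

Definition T1 (t K : nat) : fpsR := \sum_(c : 'I_K) (if (t < c)%N then 0 else (mono (t - c) 0 : fpsR)).
Definition T2 (t K : nat) : fpsR := \sum_(c : 'I_K) (if (t < c)%N then (mono 0 (c - t - 1) : fpsR) else 0).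

Lemma Fs_T (E : finType) (S : {set E}) t K :
  Fs S t K = T1 t K ^+ (#|E| - #|S|) * T2 t K ^+ #|S|.
Proof.
rewrite Fs_prod.
rewrite (eq_bigr (fun e => if e \in S then T2 t K else T1 t K)); last first.
  move=> e _; rewrite /hS /T1 /T2; case: (e \in S);
  by apply: eq_bigr => c _; case: (t < c)%N.
rewrite big_if /= !prodr_const mulrC; congr (_ * _ ^+ _).
have -> : #|(fun i : E => i \notin S)| = #|~: S| by apply: eq_card => e; rewrite inE.
by rewrite (cardsCs (~: S)) setCK.
Qed.

Lemma T1_box t u : box t u (T1 t (t + u + 2)) geo1.
Proof.
move=> i j hi hj; rewrite /T1 fps_sumE.
transitivity (\sum_(c < t + u + 2) (if (c : nat) == (t - i)%N then
               (if j == 0%N then 1 else 0) else 0 : rat)).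
  apply: eq_bigr => c _; case: ltnP => hc.
    by rewrite fps_zeroE; case: eqP => // hc'; lia.
  rewrite /mono; have -> : (i == t - c)%N = ((c : nat) == t - i)%N.
    by apply/idP/idP => /eqP h; apply/eqP; lia.
  by case: ((c : nat) == _); case: (j == 0%N).
rewrite (sum_ord_if _ _ (fun _ => if j == 0%N then 1 else 0)) ifT //; lia.
Qed.

Lemma T2_box t u : box t u (T2 t (t + u + 2)) geo2.
Proof.
move=> i j hi hj; rewrite /T2 fps_sumE.
transitivity (\sum_(c < t + u + 2) (if (c : nat) == (j + t + 1)%N then
               (if i == 0%N then 1 else 0) else 0 : rat)).
  apply: eq_bigr => c _; case: ltnP => hc.
    rewrite /mono; have -> : (j == c - t - 1)%N = ((c : nat) == j + t + 1)%N.
      by apply/idP/idP => /eqP h; apply/eqP; lia.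
    by case: ((c : nat) == _); case: (i == 0%N).
  by rewrite fps_zeroE; case: eqP => // hc'; lia.
rewrite (sum_ord_if _ _ (fun _ => if i == 0%N then 1 else 0)) ifT //; lia.
Qed.

Lemma Fs_box (E : finType) (S : {set E}) t u :
  box t u (Fs S t (t + u + 2)) ((geo1 : fpsR) ^+ (#|E| - #|S|) * (geo2 : fpsR) ^+ #|S|).
Proof. rewrite Fs_T; apply: box_mul; apply: box_pow; [exact: T1_box | exact: T2_box]. Qed.

Lemma Fs_coef (E : finType) (S : {set E}) t K i j :
  Fs S t K i j = \sum_(f : {ffun E -> 'I_K})
    (if [&& posS t f == S, alphaS S t f == i & betaS S t f == j] then 1 else 0).
Proof.
rewrite /Fs fps_sumE; apply: eq_bigr => f _.
by case: (posS t f == S) => //=; rewrite /mono [i == _]eq_sym [j == _]eq_sym.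
Qed.

Lemma count_S (E : finType) (S : {set E}) t u a b :
  \sum_(f : {ffun E -> 'I_(t + u + 2)})
    (if (posS t f == S) && ((a + alphaS S t f <= t)%N &&
         (u == b + betaS S t f + (t - a - alphaS S t f))%N) then (1:rat) else 0)
  = ((mono a b : fpsR) * (geo1 : fpsR) ^+ (#|E| - #|S|) * (geo2 : fpsR) ^+ #|S|
       * (geo3 : fpsR)) t u.
Proof.
set K := (t + u + 2)%N.
set cnd := fun i j => ((a + i <= t)%N && (u == b + j + (t - a - i))%N).
set C : fpsR := (geo1 : fpsR) ^+ (#|E| - #|S|) * (geo2 : fpsR) ^+ #|S|.
have SA : \sum_(f : {ffun E -> 'I_K})
    (if (posS t f == S) && cnd (alphaS S t f) (betaS S t f) then (1:rat) else 0) =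
    \sum_(i < t.+1) \sum_(j < u.+1) (if cnd i j then Fs S t K i j else 0).
  transitivity (\sum_(i < t.+1) \sum_(j < u.+1) \sum_(f : {ffun E -> 'I_K})
      (if cnd i j && [&& posS t f == S, alphaS S t f == i & betaS S t f == j]
       then (1:rat) else 0)); last first.
    apply: eq_bigr => i _; apply: eq_bigr => j _; rewrite Fs_coef.
    by case: (cnd i j) => //=; rewrite big1.
  symmetry; rewrite exchange_big /=.
  under eq_bigr => i _ do rewrite exchange_big /=.
  rewrite exchange_big /=; apply: eq_bigr => f _.
  set al := alphaS S t f; set be := betaS S t f.
  transitivity (\sum_(i < t.+1) (if (i : nat) == al then \sum_(j < u.+1)
     (if (j : nat) == be then
        (if (posS t f == S) && cnd al be then (1:rat) else 0) else 0) else 0)).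
    rewrite exchange_big /=; apply: eq_bigr => i _.
    case: (eqVneq (i : nat) al) => [hi|hi]; last first.
      by apply: big1 => j _; rewrite andFb !andbF.
    rewrite hi; apply: eq_bigr => j _.
    case: (eqVneq (j : nat) be) => [hj|hj].
      by rewrite hj !andbT andbC.
    by rewrite !andbF.
  rewrite (sum_ord_if _ _ (fun _ => \sum_(j < u.+1)
     (if (j : nat) == be then
        (if (posS t f == S) && cnd al be then (1:rat) else 0) else 0))).
  rewrite (sum_ord_if _ _ (fun _ =>
        (if (posS t f == S) && cnd al be then (1:rat) else 0))).
  rewrite /cnd; case: (posS t f == S) => /=; last by case: ifP => //; case: ifP.
  case: (leqP (a + al) t) => h1 /=; last by case: ifP => //; case: ifP.
  case: eqP => h2; last by case: ifP => //; case: ifP.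
  rewrite ifT; last lia.
  by rewrite ifT; last lia.
rewrite SA.
transitivity (\sum_(i < t.+1) \sum_(j < u.+1) (if cnd i j then C i j else 0)).
  apply: eq_bigr => [[i hi]] _; apply: eq_bigr => [[j hj]] _ /=.
  by case: (cnd i j) => //; rewrite Fs_box.
rewrite -!mulrA -fpsE_mul mono_mulE !mulrA -/C.
case: (leqP a t) => ha; last first.
  rewrite andFb; apply: big1 => i _; apply: big1 => j _.
  rewrite /cnd; case: leqP => //= h; lia.
case: (leqP b u) => hb; last first.
  rewrite andbF; apply: big1 => i _; apply: big1 => j _.
  rewrite /cnd; case: leqP => //= h; case: eqP => // h'; lia.
rewrite /= -fpsE_mul /fps_mul.
rewrite (@big_ord_widen _ _ _ _ t.+1 (fun i => \sum_(j < (u - b).+1)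
          C i j * geo3 (t - a - i)%N (u - b - j)%N)); last lia.
rewrite [RHS]big_mkcond /=; apply: eq_bigr => [[i hi]] _ /=.
case: (ltnP i (t - a).+1) => hit; last first.
  apply: big1 => j _; rewrite /cnd; case: leqP => //= h; lia.
rewrite (@big_ord_widen _ _ _ _ u.+1 (fun j => C i j * geo3 (t - a - i)%N (u - b - j)%N)); last lia.
rewrite [RHS]big_mkcond /=; apply: eq_bigr => [[j hj]] _ /=.
rewrite /cnd /geo3; case: (ltnP j (u - b).+1) => hju.
  have -> : ((a + i <= t)%N && (u == b + j + (t - a - i))%N) = ((t - a - i)%N == (u - b - j)%N).
    apply/andP/eqP => [[h3 /eqP h4]|h]; [lia | split; [lia | apply/eqP; lia]].
  by case: eqP; rewrite ?mulr1 ?mulr0.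
by rewrite ifF //; apply/negP => /andP [h3 /eqP h4]; lia.
Qed.

Local Close Scope ring_scope.

Lemma r_le_card (E : finType) (r : {set E} -> nat) (hr : is_matroid_rank r) (X : {set E}) : r X <= #|X|.
Proof. by case: hr. Qed.
Lemma r_mono (E : finType) (r : {set E} -> nat) (hr : is_matroid_rank r) (X Y : {set E}) :
  X \subset Y -> r X <= r Y.
Proof. by case: hr => _ h _; apply: h. Qed.
Lemma r_sub (E : finType) (r : {set E} -> nat) (hr : is_matroid_rank r) (X Y : {set E}) :
  r (X :|: Y) + r (X :&: Y) <= r X + r Y.
Proof. by case: hr => _ _ h; apply: h. Qed.

Lemma r0 (E : finType) (r : {set E} -> nat) (hr : is_matroid_rank r) : r set0 = 0.
Proof. by have := r_le_card hr set0; rewrite cards0; lia. Qed.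

Lemma indep_sub (E : finType) (r : {set E} -> nat) (hr : is_matroid_rank r) (I J : {set E}) :
  r I = #|I| -> J \subset I -> r J = #|J|.
Proof.
move=> hI hJ.
have h := r_sub hr J (I :\: J).
have e1 : J :|: (I :\: J) = I by rewrite setDE setUIr setUCr setIT; apply/setUidPr.
have e2 : J :&: (I :\: J) = set0 by rewrite setDE setICA setICr setI0.
rewrite e1 e2 r0 // in h.
have h1 := r_le_card hr J; have h2 := r_le_card hr (I :\: J).
have h3 : #|I| = #|J| + #|I :\: J|.
  by rewrite -(cardsID J I) (setIidPr hJ) addnC.
lia.
Qed.

Lemma r_add1 (E : finType) (r : {set E} -> nat) (hr : is_matroid_rank r) (X : {set E}) e :
  r (e |: X) <= r X + 1.
Proof.
have h := r_sub hr X [set e]; have h1 := r_le_card hr [set e]; rewrite cards1 in h1.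
rewrite setUC; lia.
Qed.

Lemma max_indep (E : finType) (r : {set E} -> nat) (hr : is_matroid_rank r) (I A : {set E}) :
  I \subset A -> r I = #|I| ->
  (forall e, e \in A -> e \notin I -> r (e |: I) != #|e |: I|) -> r A = #|I|.
Proof.
move=> hIA hI hmax.
have step : forall e, e \in A -> e \notin I -> r (e |: I) = r I.
  move=> e eA eI; have := hmax e eA eI; rewrite cardsU1 eI /= => hne.
  have := r_add1 hr I e; have := r_mono hr (subsetUr [set e] I); lia.
have key : forall n (T : {set E}), #|T| = n -> T \subset A :\: I -> r (I :|: T) <= r I.
  elim=> [|n IH] T hT hsub.
    by move/eqP: hT; rewrite cards_eq0 => /eqP ->; rewrite setU0.
  have [e eT] : exists e, e \in T.
    by apply/set0Pn; rewrite -card_gt0 hT.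
  set T' := T :\ e.
  have hT' : #|T'| = n by move: hT; rewrite (cardsD1 e T) eT; case.
  have hsub' : T' \subset A :\: I by apply: subset_trans hsub; apply: subsetDl.
  have IHT := IH T' hT' hsub'.
  have eAI : e \in A :\: I by apply: (subsetP hsub).
  move: eAI; rewrite inE => /andP [eI eA].
  have hs := r_sub hr (I :|: T') (e |: I).
  have eU : (I :|: T') :|: (e |: I) = I :|: T.
    apply/setP => x; rewrite !inE; case: (eqVneq x e) => [->|hx] /=.
      by rewrite eT !orbT.
    by case: (x \in I); case: (x \in T).
  have hI2 : I \subset (I :|: T') :&: (e |: I).
    by rewrite subsetI subsetUl subsetUr.
  have hm := r_mono hr hI2.
  rewrite eU in hs; have := step e eA eI; lia.
have := key _ (A :\: I) erefl (subxx _).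
have -> : I :|: (A :\: I) = A by rewrite setDE setUIr setUCr setIT; apply/setUidPr.
have := r_mono hr hIA; lia.
Qed.

Lemma exists_basis (E : finType) (r : {set E} -> nat) (hr : is_matroid_rank r) (A : {set E}) :
  exists B, is_basis r B /\ #|B :&: A| = r A.
Proof.
pose PI := fun I : {set E} => (I \subset A) && (r I == #|I|).
have P0 : PI set0 by rewrite /PI sub0set r0 // cards0.
case: (@arg_maxnP _ set0 PI (fun I => #|I|) P0) => I /andP [IA /eqP hI] maxI.
pose PJ := fun J : {set E} => (I \subset J) && (r J == #|J|).
have PJ0 : PJ I by rewrite /PJ subxx hI eqxx.
case: (@arg_maxnP _ I PJ (fun J => #|J|) PJ0) => J /andP [IJ /eqP hJ] maxJ.
have hrA : r A = #|I|.
  apply: (max_indep hr IA hI) => e eA eI; apply/negP => /eqP hi.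
  have := maxI (e |: I); rewrite /PI subUset sub1set eA IA hi eqxx /= cardsU1 eI.
  by move/(_ isT); lia.
have hrE : r setT = #|J|.
  apply: (max_indep hr (subsetT J) hJ) => e _ eJ; apply/negP => /eqP hi.
  have := maxJ (e |: J); rewrite /PJ hi eqxx andbT cardsU1 eJ.
  by rewrite (subset_trans IJ (subsetUr _ _)) => /(_ isT); lia.
exists J; split.
  by rewrite /is_basis hJ hrE !eqxx.
have hJA : r (J :&: A) = #|J :&: A| by apply: (indep_sub hr hJ); apply: subsetIl.
have IJA : I \subset J :&: A by rewrite subsetI IJ IA.
have := maxI (J :&: A); rewrite /PI subsetIr hJA eqxx => /(_ isT) h1.
have := subset_leq_card IJA; lia.
Qed.

Lemma basis_meet (E : finType) (r : {set E} -> nat) (hr : is_matroid_rank r) (B X : {set E}) :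
  is_basis r B -> #|B :&: X| <= r X.
Proof.
case/andP => /eqP hB _.
have h := indep_sub hr hB (subsetIl B X).
rewrite -h; apply: (r_mono hr); exact: subsetIr.
Qed.

Local Open Scope ring_scope.

Lemma sum_indic (R : realFieldType) (E : finType) (B X : {set E}) :
  \sum_(e in X) indic R B e = (#|B :&: X|)%:R.
Proof.
rewrite /indic -big_mkcondr /= sumr_const; congr (_ *+ _).
by apply: eq_card => e; rewrite !inE andbC.
Qed.

Lemma PM_facts (R : realFieldType) (E : finType) (r : {set E} -> nat) (hr : is_matroid_rank r)
  (p : E -> R) : in_PM r p ->
  (forall X : {set E}, \sum_(e in X) p e <= (r X)%:R) /\ \sum_e p e = (r setT)%:R.
Proof.
case=> l [l0 lA l1 lp].
have key : forall X : {set E}, \sum_(e in X) p e =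
    \sum_(B in is_basis r) l B * (#|B :&: X|)%:R.
  move=> X; under eq_bigr => e _ do rewrite lp.
  rewrite exchange_big /=; apply: eq_bigr => B _.
  by rewrite -mulr_sumr sum_indic.
split.
  move=> X; rewrite key.
  apply: le_trans (_ : \sum_(B in is_basis r) l B * (r X)%:R <= _).
    apply: ler_sum => B hB; apply: ler_wpM2l; first exact: l0.
    by rewrite ler_nat; apply: basis_meet.
  by rewrite -mulr_suml l1 mul1r.
have e1 : \sum_(e in setT) p e = \sum_e p e by apply: eq_bigl => e; rewrite inE.
rewrite -e1 key.
transitivity (\sum_(B in is_basis r) l B * (r setT)%:R).
  apply: eq_bigr => B /andP [_ /eqP <-].
  by rewrite setIT.
by rewrite -mulr_suml l1 mul1r.
Qed.

Lemma Delta_facts (R : realFieldType) (E : finType) (d : E -> R) :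
  in_Delta d -> (forall e, 0 <= d e) /\ \sum_e d e = 1.
Proof.
case=> l [l0 _ l1 ld].
have dl : forall e, d e = l e.
  move=> e; rewrite ld (bigD1 e) //= big1 ?addr0.
    by rewrite /indic inE eqxx mulr1.
  by move=> i hi; rewrite /indic inE eq_sym; case: eqP hi => [->|]; rewrite ?eqxx ?andbF ?mulr0.
split; first by move=> e; rewrite dl.
by rewrite (eq_bigr l) // -l1; apply: eq_bigl.
Qed.

Lemma Delta_of (R : realFieldType) (E : finType) (d : E -> R) :
  (forall e, 0 <= d e) -> \sum_e d e = 1 -> in_Delta d.
Proof.
move=> d0 d1; exists d; split => //.
move=> e; rewrite (bigD1 e) //= big1 ?addr0.
  by rewrite /indic inE eqxx mulr1.
by move=> i hi; rewrite /indic inE eq_sym; case: eqP hi => [->|]; rewrite ?eqxx ?andbF ?mulr0.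
Qed.

Lemma PM_of (R : realFieldType) (E : finType) (r : {set E} -> nat) (B : {set E}) :
  is_basis r B -> in_PM r (indic R B).
Proof.
move=> hB; exists (fun B' => if B' == B then 1 else 0); split.
- by move=> B'; case: (B' == B).
- move=> B1 hB1; case: eqP => // eB; move: hB1; rewrite eB => /negP; case; exact: hB.
- by rewrite (bigD1 B) //= eqxx big1 ?addr0 // => B' /andP [_ /negbTE ->].
- move=> e; rewrite (bigD1 B) //= eqxx mul1r big1 ?addr0 //.
  by move=> B' /andP [_ /negbTE ->]; rewrite mul0r.
Qed.

Lemma sum_splitS (R : realFieldType) (E : finType) (S : {set E}) (F : E -> R) :
  \sum_e F e = \sum_(e in S) F e + \sum_(e in ~: S) F e.
Proof.
rewrite (bigID (mem S)) /=; congr (_ + _); apply: eq_bigl => e; by rewrite ?inE.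
Qed.

Definition xf (R : realFieldType) (E : finType) (t K : nat) (f : {ffun E -> 'I_K}) : E -> R :=
  fun e => (f e : nat)%:R - t%:R.

Lemma sumS_x (R : realFieldType) (E : finType) t K (f : {ffun E -> 'I_K}) :
  \sum_(e in posS t f) xf R t f e = (#|posS t f| + betaS (posS t f) t f)%:R.
Proof.
rewrite /betaS natrD natr_sum -[#|posS t f|]sum1_card natr_sum -big_split /=.
apply: eq_bigr => e; rewrite inE => he.
set k := (f e - t - 1)%N.
rewrite /xf (_ : (f e : nat) = (1 + k + t)%N); last by rewrite /k; lia.
by rewrite natrD addrK natrD.
Qed.

Lemma sumN_x (R : realFieldType) (E : finType) t K (f : {ffun E -> 'I_K}) :
  \sum_(e in ~: posS t f) xf R t f e = - (alphaS (posS t f) t f)%:R.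
Proof.
rewrite /alphaS natr_sum -sumrN; apply: eq_bigr => e; rewrite !inE -leqNgt => he.
set k := (t - f e)%N.
rewrite /xf (_ : t = (f e + k)%N); last by rewrite /k; lia.
by rewrite natrD opprD addrA subrr add0r.
Qed.

Lemma sum_d_le (R : realFieldType) (E : finType) (d : E -> R) (X : {set E}) :
  (forall e, 0 <= d e) -> \sum_e d e = 1 ->
  0 <= \sum_(e in X) d e /\ \sum_(e in X) d e <= 1.
Proof.
move=> d0 d1; split; first by apply: sumr_ge0.
rewrite -d1 (sum_splitS X d) lerDl; exact: sumr_ge0.
Qed.

Lemma mink_to_cond (R : realFieldType) (E : finType) (r : {set E} -> nat)
  (hr : is_matroid_rank r) t u (f : {ffun E -> 'I_(t + u + 2)}) :
  in_minkowski r t u (xf R t f) ->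
  (r setT - r (posS t f) + alphaS (posS t f) t f <= t)%N /\
  (#|posS t f| + betaS (posS t f) t f + t = r setT + u + alphaS (posS t f) t f)%N.
Proof.
case=> p [d1 [d2 [hp hd1 hd2 hx]]].
have [pX pE] := PM_facts hr hp.
have [d10 d11] := Delta_facts hd1.
have [d20 d21] := Delta_facts hd2.
set S := posS t f; set A := alphaS S t f; set Bt := betaS S t f.
have hrS : (r S <= r setT)%N := r_mono hr (subsetT S).
have dec : forall X : {set E}, \sum_(e in X) xf R t f e =
    \sum_(e in X) p e + u%:R * \sum_(e in X) d1 e - t%:R * \sum_(e in X) d2 e.
  move=> X; rewrite (eq_bigr _ (fun e _ => hx e)) !big_split /= -!mulr_sumr sumrN.
  by rewrite mulrN.
have allE : \sum_(e in setT) xf R t f e = \sum_e xf R t f e by apply: eq_bigl => e; rewrite inE.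
have tot : \sum_e xf R t f e = (r setT)%:R + u%:R - t%:R.
  rewrite -allE dec.
  have e1 : forall F : E -> R, \sum_(e in setT) F e = \sum_e F e.
    by move=> F; apply: eq_bigl => e; rewrite inE.
  by rewrite !e1 pE d11 d21 !mulr1.
have tot2 : \sum_e xf R t f e = (#|S| + Bt)%:R - A%:R.
  by rewrite (sum_splitS S) sumS_x sumN_x.
split.
  have hN := dec (~: S); rewrite sumN_x in hN.
  have hp1 := pX S.
  have hp2 : \sum_(e in S) p e + \sum_(e in ~: S) p e = (r setT)%:R by rewrite -sum_splitS.
  have [h1a _] := sum_d_le (~: S) d10 d11.
  have [_ h2b] := sum_d_le (~: S) d20 d21.
  have k1 : 0 <= u%:R * \sum_(e in ~: S) d1 e by apply: mulr_ge0.
  have k2 : t%:R * \sum_(e in ~: S) d2 e <= t%:R.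
    by rewrite -[leRHS]mulr1; apply: ler_wpM2l.
  rewrite -(ler_nat R) natrD natrB //.
  move: hN k1 k2 hp1 hp2.
  set s1 := u%:R * _; set s2 := t%:R * _; set s3 := \sum_(e in S) p e;
  set s4 := \sum_(e in ~: S) p e => hN k1 k2 hp1 hp2.
  lra.
apply/eqP; rewrite -(eqr_nat R) !natrD; apply/eqP.
move: tot tot2; rewrite natrD; lra.
Qed.

Lemma indic1_sum (R : realFieldType) (E : finType) (e0 : E) : \sum_e indic R [set e0] e = 1.
Proof.
rewrite (bigD1 e0) //= big1 ?addr0 /indic ?inE ?eqxx //.
by move=> i hi; rewrite inE (negbTE hi).
Qed.

Lemma cond_to_mink (R : realFieldType) (E : finType) (r : {set E} -> nat)
  (hr : is_matroid_rank r) (hE : (0 < #|E|)%N) t u (f : {ffun E -> 'I_(t + u + 2)}) :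
  (r setT - r (posS t f) + alphaS (posS t f) t f <= t)%N ->
  (#|posS t f| + betaS (posS t f) t f + t = r setT + u + alphaS (posS t f) t f)%N ->
  in_minkowski r t u (xf R t f).
Proof.
set S := posS t f; set A := alphaS S t f; set Bt := betaS S t f.
move=> c1 c2.
have hrS : (r S <= r setT)%N := r_mono hr (subsetT S).
have /card_gt0P [e0 _] := hE.
have [B [hB hBS]] := exists_basis hr S.
have hBc : #|B| = r setT by case/andP: hB => _ /eqP.
pose bI e : nat := if e \in B then 1%N else 0%N.
pose sl := (t - (r setT - r S + A))%N.
pose z e : nat := ((if e \in S then 0 else bI e + (t - f e)) + (if e == e0 then sl else 0))%N.
have sumbI : (\sum_e bI e = r setT)%N.
  by rewrite -hBc /bI -big_mkcond /= sum1_card.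
have sumz : (\sum_e z e = t)%N.
  rewrite /z big_split /= -big_mkcond /= big_pred1_eq.
  rewrite (bigID (mem S)) /= big1 ?add0n; last by move=> e ->.
  under eq_bigr => e he do rewrite (negbTE he).
  rewrite big_split /=.
  have -> : (\sum_(e | e \notin S) (t - f e) = A)%N.
    by rewrite /A /alphaS; apply: eq_bigl => e; rewrite in_setC.
  have -> : (\sum_(e | e \notin S) bI e = #|B :\: S|)%N.
    by rewrite /bI /= -big_mkcondr /= sum1_card; apply: eq_card => e; rewrite [in RHS]inE /in_mem /=.
  have := cardsID S B; rewrite ?hBS ?hBc; try (rewrite setIC hBS); rewrite /sl; lia.
pose y e : R := xf R t f e - (bI e)%:R + (z e)%:R.
have y0 : forall e, 0 <= y e.
  move=> e; have hS : (e \in S) = (t < f e)%N by rewrite inE.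
  have hn : (bI e + t <= f e + z e)%N.
    by rewrite /z /bI; move: hS; case: (e \in S); case: (e \in B); case: (e == e0); lia.
  rewrite /y /xf; move: hn; rewrite -(ler_nat R) !natrD => hn; lra.
have sumy : \sum_e y e = u%:R.
  have -> : \sum_e y e = \sum_e xf R t f e - \sum_e (bI e)%:R + \sum_e (z e)%:R.
    by rewrite -sumrB -big_split.
  rewrite -!natr_sum sumbI sumz.
  rewrite (sum_splitS S) sumS_x sumN_x.
  have : ((#|S| + Bt + t)%:R : R) = (r setT + u + A)%:R by rewrite c2.
  rewrite !natrD; lra.
pose d1 e : R := if u == 0%N then indic R [set e0] e else y e / u%:R.
pose d2 e : R := if t == 0%N then indic R [set e0] e else (z e)%:R / t%:R.
have Dind : in_Delta (indic R [set e0]).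
  apply: Delta_of; last exact: indic1_sum.
  by move=> e; rewrite /indic; case: (_ \in _).
exists (indic R B), d1, d2; split.
- exact: PM_of.
- rewrite /d1; case: eqP => hu; first exact: Dind.
  apply: Delta_of => [e|]; first by apply: divr_ge0.
  by rewrite -mulr_suml sumy divff // pnatr_eq0; apply/eqP.
- rewrite /d2; case: eqP => ht; first exact: Dind.
  apply: Delta_of => [e|]; first by apply: divr_ge0.
  by rewrite -mulr_suml -natr_sum sumz divff // pnatr_eq0; apply/eqP.
move=> e.
have ud : u%:R * d1 e = y e.
  rewrite /d1; case: eqP => hu.
    rewrite hu mul0r; symmetry.
    have h := @psumr_eq0P _ _ predT y (fun i _ => y0 i).
    by apply: h => //; rewrite sumy hu.
  by rewrite mulrC divfK // pnatr_eq0; apply/eqP.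
have td : t%:R * d2 e = (z e)%:R.
  rewrite /d2; case: eqP => ht.
    rewrite ht mul0r.
    have : (z e <= \sum_i z i)%N by rewrite (bigD1 e) //= leq_addr.
    by rewrite sumz ht leqn0 => /eqP ->.
  by rewrite mulrC divfK // pnatr_eq0; apply/eqP.
rewrite mulrN ud td.
have -> : indic R B e = (bI e)%:R by rewrite /indic /bI; case: (e \in B).
rewrite /y; lra.
Qed.

Lemma asboolP (P : Prop) : reflect P (asbool P).
Proof. by rewrite /asbool; case: excluded_middle_informative => h; constructor. Qed.

Theorem mainTheorem3 (R : realFieldType) (E : finType) (r : {set E} -> nat)
    (hr : is_matroid_rank r) (hE : (0 < #|E|)%N) :
  forall t u : nat, ((QM R r t u)%:R : rat) = rhs_series r t u.
Proof.
move=> t u.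
have hle : forall S, (r S <= r setT)%N /\ (r S <= #|S|)%N.
  by move=> S; split; [apply: (r_mono hr); apply: subsetT | apply: r_le_card].
have hn : (r setT <= #|E|)%N by rewrite -cardsT; apply: r_le_card.
rewrite rhs_decomp //.

pose cf (f : {ffun E -> 'I_(t + u + 2)}) := ((r setT - r (posS t f) + alphaS (posS t f) t f <= t)%N &&
  (#|posS t f| + betaS (posS t f) t f + t == r setT + u + alphaS (posS t f) t f)%N).
have QE : QM R r t u = #|[set f : {ffun E -> 'I_(t + u + 2)} | cf f]|.
  rewrite /QM; apply: eq_card => f; rewrite !inE.
  apply/asboolP/andP => [h|[h1 /eqP h2]].
    by have [h1 h2] := mink_to_cond hr h; split => //; apply/eqP.
  exact: cond_to_mink.
rewrite QE -sum1_card natr_sum.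
transitivity (\sum_(S : {set E}) \sum_(f : {ffun E -> 'I_(t + u + 2)})
   (if (posS t f == S) && cf f then (1 : rat) else 0)).
  rewrite exchange_big /= big_mkcond /=; apply: eq_bigr => f _.
  rewrite (bigD1 (posS t f)) //= eqxx /= big1 ?addr0.
    by rewrite inE; case: (cf f).
  by move=> S hS; rewrite eq_sym (negbTE hS).
apply: eq_bigr => S _.
rewrite -(count_S S t u).
apply: eq_bigr => f _.
case: eqP => //= hS; rewrite /cf hS.
have [h1 h2] := hle S.
congr (if _ then _ else _).
apply/andP/andP => [[c1 /eqP c2]|[c1 /eqP c2]]; split => //; apply/eqP; move: c1 c2 h1 h2; generalize (r S) (r setT) (alphaS S t f) (betaS S t f) #|S|; intros; lia.
Qed.
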